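(* Let $M$ be a modular lattice of finite length. For all $a,b\in M$: (a) if $a\le b$ then $a^*\le b^*$; (a$^\delta$) if $a\le b$ then $a^+\le b^+$; (b) $a\le a^{+*}\le a^*$; (b$^\delta$) $a^+\le a^{*+}\le a$; (c) $a^{*+*}=a^*$; (c$^\delta$) $a^{+*+}=a^+$; (d) if $a=a^{*+}$ and $b=b^{*+}$ then $(a+b)^{*+}=a+b$; (d$^\delta$) if $a=a^{+*}$ and $b=b^{+*}$ then $(a\cdot b)^{+*}=a\cdot b$; (e) $(a+b)^+=a^++b^+$; (e$^\delta$) $(a\cdot b)^*=a^*\cdot b^*$. (Here $a^{*+}$ means $(a^* )^+$, etc.)
   Context: $M$ is a modular lattice of finite length (every chain finite) with join $+$, meet $\cdot$, least element $0$ and greatest element $1$. For $a\in M$: $a^*$ is the join of all elements covering $a$ if $a<1$, and $1^*=1$; $a^+$ is the meet of all elements covered by $a$ if $a>0$, and $0^+=0$. *)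

(* Defs.v *)
From HB Require Import structures.
From mathcomp Require Import all_boot all_order.
From Stdlib Require Import ClassicalEpsilon.
Set Implicit Arguments. Unset Strict Implicit. Unset Printing Implicit Defensive.
Import Order.LTheory.
Local Open Scope order_scope.

Section ModLat.
Context {disp : Order.disp_t} {T : tbLatticeType disp}.

Definition modular_lattice : Prop :=
  forall a b c : T, a <= c -> a `|` (b `&` c) = (a `|` b) `&` c.

Definition is_chain (C : T -> Prop) : Prop :=
  forall x y, C x -> C y -> (x <= y) || (y <= x).

Definition finite_length : Prop :=
  forall C : T -> Prop, is_chain C -> exists s : seq T, forall x, C x <-> x \in s.

Definition covers (x y : T) : Prop := x < y /\ ~ (exists z, x < z /\ z < y).

Definition is_lub (P : T -> Prop) (u : T) : Prop :=
  (forall x, P x -> x <= u) /\ (forall v, (forall x, P x -> x <= v) -> u <= v).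
Definition is_glb (P : T -> Prop) (u : T) : Prop :=
  (forall x, P x -> u <= x) /\ (forall v, (forall x, P x -> v <= x) -> v <= u).

(* join / meet of an arbitrary set (exists in a lattice of finite length;
   chosen classically, unique by antisymmetry) *)
Definition bigjoin (P : T -> Prop) : T := epsilon (inhabits \bot) (is_lub P).
Definition bigmeet (P : T -> Prop) : T := epsilon (inhabits \bot) (is_glb P).

Definition star (a : T) : T := if a == \top then \top else bigjoin (covers a).
Definition plus (a : T) : T := if a == \bot then \bot else bigmeet (fun y => covers y a).

End ModLat.

(* Main.v *)
Require Import Defs.
From HB Require Import structures.
From mathcomp Require Import all_boot all_order.
From Stdlib Require Import Classical ClassicalEpsilon.
Set Implicit Arguments. Unset Strict Implicit. Unset Printing Implicit Defensive.
Import Order.LTheory.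
Local Open Scope order_scope.

Section Cov.
Context {disp : Order.disp_t} {T : tbLatticeType disp}.

Lemma covers_lt (x y : T) : covers x y -> x < y.
Proof. by case. Qed.

Lemma covers_mid (y a z : T) : covers y a -> y <= z -> z <= a -> z = y \/ z = a.
Proof.
move=> [ya H] yz za.
case: (eqVneq z y) => [->|zy]; first by left.
case: (eqVneq z a) => [->|za']; first by right.
exfalso; apply: H; exists z; split.
- by rewrite lt_neqAle eq_sym zy.
- by rewrite lt_neqAle za'.
Qed.

Lemma coversEdual (x y : T) : @covers _ T^d x y <-> covers y x.
Proof.
split=> -[h1 h2]; split => //.
- by move=> [z [z1 z2]]; apply: h2; exists z; split.
- by move=> [z [z1 z2]]; apply: h2; exists z; split.
Qed.

Lemma is_lubEdual (P : T -> Prop) u : @is_lub _ T^d P u <-> is_glb P u.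
Proof. by []. Qed.
Lemma is_glbEdual (P : T -> Prop) u : @is_glb _ T^d P u <-> is_lub P u.
Proof. by []. Qed.

Lemma lub_uniq (P : T -> Prop) u v : is_lub P u -> is_lub P v -> u = v.
Proof.
move=> [u1 u2] [v1 v2]; apply: le_anti; rewrite u2 //= v2 //.
Qed.

End Cov.

Lemma glb_uniq {disp} {T : tbLatticeType disp} (P : T -> Prop) u v :
  is_glb P u -> is_glb P v -> u = v.
Proof. exact: (@lub_uniq _ T^d). Qed.

Lemma modular_dual {disp} {T : tbLatticeType disp} :
  @modular_lattice _ T -> @modular_lattice _ T^d.
Proof.
move=> H a b c ca.
have := H c b a ca.
move=> E.
change ((a:T) `&` ((b:T) `|` (c:T)) = ((a:T) `&` (b:T)) `|` (c:T)).
change ((c:T) `|` ((b:T) `&` (a:T)) = ((c:T) `|` (b:T)) `&` (a:T)) in E.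
by rewrite meetC [(a:T) `&` _]meetC [RHS]joinC E [(c:T) `|` _]joinC.
Qed.

Lemma finite_length_dual {disp} {T : tbLatticeType disp} :
  @finite_length _ T -> @finite_length _ T^d.
Proof.
move=> H C HC; apply: H => x y Cx Cy.
by have := HC x y Cx Cy; rewrite orbC.
Qed.

Section Fin.
Context {disp : Order.disp_t} {T : tbLatticeType disp} (Hfin : @finite_length _ T).

Lemma no_incr (f : nat -> T) : (forall n, f n < f n.+1) -> False.
Proof.
move=> Hf.
have mono : forall i j, (i < j)%N -> f i < f j.
  move=> i; elim=> // j IH; rewrite ltnS leq_eqVlt => /orP [/eqP ->|/IH h] //.
  exact: lt_trans h (Hf j).
have inj : injective f.
  move=> i j E; case: (ltngtP i j) => // h; have := mono _ _ h;
  by rewrite E ltxx.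
have HC : is_chain (fun x => exists n, x = f n).
  move=> x y [i ->] [j ->]; case: (leqP i j) => h.
  - move: h; rewrite leq_eqVlt => /orP [/eqP ->|/mono/ltW ->] //; by rewrite lexx.
  - by rewrite (ltW (mono _ _ h)) orbT.
have [s Hs] := Hfin HC.
have := @uniq_leq_size _ (map f (iota 0 (size s).+1)) s.
rewrite (map_inj_uniq inj) iota_uniq size_map size_iota ltnn => H.
suff : false by []. apply: H => //.
move=> x /mapP [n _ ->]; apply/Hs; by exists n.
Qed.

Lemma exists_max (P : T -> Prop) x0 : P x0 -> exists m, P m /\ forall y, P y -> ~ m < y.
Proof.
move=> Px0; apply: NNPP => Hn.
have H : forall m : {x | P x}, exists y : {x | P x}, proj1_sig m < proj1_sig y.
  move=> [m Pm]; apply: NNPP => H1; apply: Hn; exists m; split => // y Py my.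
  by apply: H1; exists (exist _ y Py).
pose step m := proj1_sig (constructive_indefinite_description _ (H m)).
apply: (@no_incr (fun n => proj1_sig (iter n step (exist _ x0 Px0)))) => n.
rewrite iterS; exact: (proj2_sig (constructive_indefinite_description _ (H _))).
Qed.

Definition fjoin (s : seq T) := foldr (@Order.join _ T) \bot s.

Lemma lub_fin (P : T -> Prop) :
  exists s, (forall y, y \in s -> P y) /\ is_lub P (fjoin s).
Proof.
pose F x := exists s, (forall y, y \in s -> P y) /\ x = fjoin s.
have [m [[s [Ps ->]] Hm]] := @exists_max F \bot (ex_intro _ [::] (conj (fun y (h : y \in [::]) => False_ind _ (notF h)) erefl)).
exists s; split => //; split.
- move=> p Pp; apply: NNPP => pm; apply: (Hm (p `|` fjoin s)).
    exists (p :: s); split => //= y; rewrite inE => /orP [/eqP ->|] //; exact: Ps.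
  rewrite lt_neqAle leUr andbT; apply/negP => /eqP E; apply: pm; rewrite E leUl //.
- move=> v Hv; elim: s Ps {Hm} => [|x s IH] Ps /=; first exact: le0x.
  rewrite leUx Hv ?IH //; first by move=> y ys; apply: Ps; rewrite inE ys orbT.
  by apply: Ps; rewrite inE eqxx.
Qed.

Lemma bigjoin_lub (P : T -> Prop) : is_lub P (bigjoin P).
Proof.
rewrite /bigjoin; apply: epsilon_spec.
by have [s [_ H]] := lub_fin P; exists (fjoin s).
Qed.

End Fin.

Lemma no_decr {disp} {T : tbLatticeType disp} (Hfin : @finite_length _ T) (f : nat -> T) :
  (forall n, f n.+1 < f n) -> False.
Proof. exact: (@no_incr _ T^d (finite_length_dual Hfin)). Qed.

Lemma exists_min {disp} {T : tbLatticeType disp} (Hfin : @finite_length _ T)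
  (P : T -> Prop) x0 : P x0 -> exists m, P m /\ forall y, P y -> ~ y < m.
Proof. exact: (@exists_max _ T^d (finite_length_dual Hfin)). Qed.

Definition fmeet {disp} {T : tbLatticeType disp} (s : seq T) := foldr (@Order.meet _ T) \top s.

Lemma glb_fin {disp} {T : tbLatticeType disp} (Hfin : @finite_length _ T) (P : T -> Prop) :
  exists s, (forall y, y \in s -> P y) /\ is_glb P (fmeet s).
Proof. exact: (@lub_fin _ T^d (finite_length_dual Hfin)). Qed.

Lemma bigmeet_glb {disp} {T : tbLatticeType disp} (Hfin : @finite_length _ T) (P : T -> Prop) :
  is_glb P (bigmeet P).
Proof.
rewrite /bigmeet; apply: epsilon_spec.
by have [s [_ H]] := glb_fin Hfin P; exists (fmeet s).
Qed.

Lemma is_lub_ext {disp} {T : tbLatticeType disp} (P Q : T -> Prop) u :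
  (forall x, P x <-> Q x) -> is_lub P u -> is_lub Q u.
Proof.
move=> E [h1 h2]; split => [x /E|v Hv]; first exact: h1.
by apply: h2 => x /E; apply: Hv.
Qed.

Lemma is_glb_ext {disp} {T : tbLatticeType disp} (P Q : T -> Prop) u :
  (forall x, P x <-> Q x) -> is_glb P u -> is_glb Q u.
Proof. exact: (@is_lub_ext _ T^d). Qed.

Section Star.
Context {disp : Order.disp_t} {T : tbLatticeType disp} (Hfin : @finite_length _ T).

Lemma exists_cover_up (a : T) : a != \top -> exists c, covers a c.
Proof.
move=> at1.
have h : a < \top by rewrite lt_neqAle at1 lex1.
have [m [am Hm]] := @exists_min _ _ Hfin (fun z => a < z) \top h.
exists m; split => // -[z [az zm]]; exact: Hm z az zm.
Qed.

Lemma star_ge (a : T) : a <= star a.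
Proof.
rewrite /star; case: eqP => [->|/eqP at1] //.
have [c ac] := exists_cover_up at1.
have [h1 _] := bigjoin_lub Hfin (covers a).
exact: le_trans (ltW (covers_lt ac)) (h1 _ ac).
Qed.

Lemma covers_le_star (a c : T) : covers a c -> c <= star a.
Proof.
move=> ac; rewrite /star; case: eqP => [_|_]; first exact: lex1.
by have [h1 _] := bigjoin_lub Hfin (covers a); apply: h1.
Qed.

Lemma star_min (a v : T) : (forall c, covers a c -> c <= v) -> a <= v -> star a <= v.
Proof.
move=> Hv av; rewrite /star; case: eqP => [E|_].
  by rewrite -E.
by have [_ h2] := bigjoin_lub Hfin (covers a); apply: h2.
Qed.

End Star.

Lemma starEdual {disp} {T : tbLatticeType disp} (Hfin : @finite_length _ T) (a : T) :
  star (a : T^d) = plus a.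
Proof.
rewrite /star /plus; case: eqP => _ //.
apply: (@glb_uniq _ T (fun y => covers y a)); last exact: bigmeet_glb.
apply: (@is_glb_ext _ T (@covers _ T^d a)); first by move=> x; exact: coversEdual.
exact: (bigjoin_lub (T := T^d) (finite_length_dual Hfin)).
Qed.

Lemma plusEdual {disp} {T : tbLatticeType disp} (Hfin : @finite_length _ T) (a : T) :
  plus (a : T^d) = star a.
Proof.
rewrite /star /plus; case: eqP => _ //.
apply: (@lub_uniq _ T (covers a)); last exact: bigjoin_lub.
apply: (@is_lub_ext _ T (fun y => @covers _ T^d y a)); first by move=> x; exact: coversEdual.
exact: (bigmeet_glb (T := T^d) (finite_length_dual Hfin)).
Qed.

Section Mod.
Context {disp : Order.disp_t} {T : tbLatticeType disp} (Hmod : @modular_lattice _ T).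

Lemma cover_meet (y a b : T) : covers y a -> b <= a -> ~~ (b <= y) -> covers (b `&` y) b.
Proof.
move=> ya ba nby; split.
  rewrite lt_neqAle leIl andbT; apply/eqP => E; move/negP: nby; apply.
  by rewrite -E leIr.
move=> [z [h1 h2]].
have ya' := ltW (covers_lt ya).
have za : z `|` y <= a by rewrite leUx ya' (le_trans (ltW h2) ba).
have [E|E] := covers_mid ya (leUr y z) za.
  have zy : z <= y by rewrite -E leUl.
  have : z <= b `&` y by rewrite lexI zy (ltW h2).
  by rewrite (lt_geF h1).
have := Hmod y (ltW h2); rewrite E (meet_r ba) meetC (join_l (ltW h1)) => Ez.
by move: h2; rewrite Ez ltxx.
Qed.

End Mod.

Lemma cover_join {disp} {T : tbLatticeType disp} (Hmod : @modular_lattice _ T) (y c b : T) :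
  covers y c -> y <= b -> ~~ (c <= b) -> covers b (b `|` c).
Proof.
move=> yc yb ncb.
have := @cover_meet _ T^d (modular_dual Hmod) c y b.
move=> /(_ _ yb ncb) H; apply/coversEdual; apply: H; exact/coversEdual.
Qed.

Lemma star_mono {disp} {T : tbLatticeType disp} (Hmod : @modular_lattice _ T)
  (Hfin : @finite_length _ T) (a b : T) : a <= b -> star a <= star b.
Proof.
move=> ab; apply: star_min => //; last exact: le_trans ab (star_ge Hfin b).
move=> c ac; case: (boolP (c <= b)) => cb; first exact: le_trans cb (star_ge Hfin b).
have := cover_join Hmod ac ab cb => /(covers_le_star Hfin); apply: le_trans.
exact: leUr.
Qed.

Section PlusD.
Context {disp : Order.disp_t} {T : tbLatticeType disp} (Hfin : @finite_length _ T).


Lemma plus_le (a : T) : plus a <= a.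
Proof. by have := star_ge (finite_length_dual Hfin) a; rewrite (starEdual Hfin). Qed.

Lemma cover_ge_plus (y a : T) : covers y a -> plus a <= y.
Proof.
move=> ya; have := @covers_le_star _ T^d (finite_length_dual Hfin) a y; rewrite (starEdual Hfin) => h.
by apply: h; apply/coversEdual.
Qed.

Lemma plus_max (a v : T) : (forall y, covers y a -> v <= y) -> v <= a -> v <= plus a.
Proof.
move=> H va; have := @star_min _ T^d (finite_length_dual Hfin) a v; rewrite (starEdual Hfin) => h.
apply: h va => c /coversEdual; exact: H.
Qed.

End PlusD.

Lemma plus_mono {disp} {T : tbLatticeType disp} (Hmod : @modular_lattice _ T)
  (Hfin : @finite_length _ T) (a b : T) : a <= b -> plus a <= plus b.
Proof.
move=> ab; have := @star_mono _ T^d (modular_dual Hmod) (finite_length_dual Hfin) b a ab.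
by rewrite !(starEdual Hfin).
Qed.

Section ATCO.
Context {disp : Order.disp_t} {T : tbLatticeType disp}.
Definition AT (w u : T) := w <= u /\
  forall J, (forall c, covers w c -> c <= u -> c <= J) -> u <= w `|` J.
Definition CO (w u : T) := w <= u /\
  forall J, (forall y, covers y u -> w <= y -> J <= y) -> u `&` J <= w.
End ATCO.

Lemma ATEdual {disp} {T : tbLatticeType disp} (w u : T) : @AT _ T^d u w <-> CO w u.
Proof.
split=> -[h1 h2]; split=> // J HJ; apply: h2 => y /coversEdual; exact: HJ.
Qed.

Lemma COEdual {disp} {T : tbLatticeType disp} (w u : T) : @CO _ T^d u w <-> AT w u.
Proof.
split=> -[h1 h2]; split=> // J HJ; apply: h2 => y /coversEdual; exact: HJ.
Qed.

Section Key.
Context {disp : Order.disp_t} {T : tbLatticeType disp}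
  (Hmod : @modular_lattice _ T) (Hfin : @finite_length _ T).

Lemma co_at_list (u : T) (s : seq T) : (forall y, y \in s -> covers y u) ->
  forall J, (forall c, covers (u `&` fmeet s) c -> c <= u -> c <= J) -> u <= (u `&` fmeet s) `|` J.
Proof.
elim: s => [|y s IH] Hs J HJ.
  by rewrite /= meetx1 leUl.
have Hs' : forall z, z \in s -> covers z u by move=> z zs; apply: Hs; rewrite inE zs orbT.
have yu : covers y u by apply: Hs; rewrite inE eqxx.
set m := u `&` fmeet s.
have Em : u `&` fmeet (y :: s) = m `&` y.
  by rewrite /= /m meetCA meetA [y `&` u]meetC -meetA [y `&` _]meetC meetA.
rewrite Em in HJ *.
have mu : m <= u by rewrite /m leIl.
have yu' := ltW (covers_lt yu).
case: (boolP (m <= y)) => my.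
  by rewrite (meet_l my) in HJ *; apply: IH.
have cov := cover_meet Hmod yu mu my.
have mJ : m <= J by apply: HJ => //.
have HJ' : forall c, covers m c -> c <= u -> c <= J.
  move=> c mc cu.
  have mc' := ltW (covers_lt mc).
  have cy : ~~ (c <= y).
    by apply/negP => cy; move/negP: my; apply; exact: le_trans mc' cy.
  have myu : m `|` y = u.
    have h : m `|` y <= u by rewrite leUx mu yu'.
    have [E|//] := covers_mid yu (leUr y m) h.
    by move: my; rewrite -{1}E leUl.
  have Ec : m `|` (y `&` c) = c by rewrite (Hmod y mc') myu meet_r.
  have cyc := cover_meet Hmod yu cu cy.
  have nb : ~~ (c `&` y <= m).
    apply/negP => h; move: (covers_lt mc); rewrite -Ec meetC (join_l h) ltxx //.
  have cov2 := cover_meet Hmod mc (leIl c y) nb.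
  have E2 : (c `&` y) `&` m = m `&` y.
    by rewrite meetC meetA (meet_l mc').
  rewrite E2 in cov2.
  have cyJ : c `&` y <= J by apply: HJ => //; exact: le_trans (leIl c y) cu.
  by rewrite -Ec leUx mJ meetC cyJ.
have := IH Hs' J HJ'; rewrite -/m (join_r mJ) => uJ.
exact: le_trans uJ (leUr _ _).
Qed.

Lemma co_at (w u : T) : CO w u -> AT w u.
Proof.
move=> [wu Hco].
have [s [Hs [g1 g2]]] := glb_fin Hfin (fun y => covers y u /\ w <= y).
have E : w = u `&` fmeet s.
  apply/le_anti; rewrite lexI wu g2 /=; last by move=> x [].
  by apply: Hco => y yu wy; apply: g1.
split => //; rewrite E; apply: co_at_list.
by move=> y /Hs [].
Qed.

End Key.

Lemma at_co {disp} {T : tbLatticeType disp} (Hmod : @modular_lattice _ T)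
  (Hfin : @finite_length _ T) (w u : T) : AT w u -> CO w u.
Proof.
move=> /COEdual H; apply/ATEdual.
exact: (@co_at _ T^d (modular_dual Hmod) (finite_length_dual Hfin)).
Qed.

Section AT2.
Context {disp : Order.disp_t} {T : tbLatticeType disp}
  (Hmod : @modular_lattice _ T) (Hfin : @finite_length _ T).

Lemma at_up (x u y : T) : AT x u -> x <= y -> AT y (u `|` y).
Proof.
move=> [xu H] xy; split; first exact: leUr.
move=> J HJ.
have : u <= x `|` (y `|` J).
  apply: H => c xc cu.
  case: (boolP (c <= y)) => cy; first exact: lexUl.
  have cov := cover_join Hmod xc xy cy.
  have : y `|` c <= J by apply: HJ => //; rewrite leUx leUr (le_trans cu (leUl _ _)).
  move=> h; apply: lexUr; exact: le_trans (leUr c y) h.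
rewrite joinA (join_r xy) => uyJ.
by rewrite leUx uyJ leUl.
Qed.

Lemma at_join (w u1 u2 : T) : AT w u1 -> AT w u2 -> AT w (u1 `|` u2).
Proof.
move=> [w1 H1] [w2 H2]; split; first exact: lexUl.
move=> J HJ; rewrite leUx H1 ?H2 // => c wc cu; apply: HJ => //.
- exact: lexUr.
- exact: lexUl.
Qed.

Lemma co_plus (a : T) : CO (plus a) a.
Proof.
split; first exact: plus_le.
move=> J HJ; apply: plus_max => //; last exact: leIl.
move=> y ya; apply: leIxr; apply: HJ => //; exact: cover_ge_plus.
Qed.

Lemma co_plus_le (w u : T) : CO w u -> plus u <= w.
Proof.
move=> [_ H]; have := H (plus u) (fun y yu _ => cover_ge_plus Hfin yu).
by rewrite (meet_r (plus_le Hfin u)).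
Qed.

End AT2.

Section Parts.
Context {disp : Order.disp_t} {T : tbLatticeType disp}
  (Hmod : @modular_lattice _ T) (Hfin : @finite_length _ T).

Lemma part_b1 (a : T) : a <= star (plus a).
Proof.
have [_ H] := co_at Hmod Hfin (co_plus Hfin a).
have := H (star (plus a)) (fun c pc _ => covers_le_star Hfin pc).
by rewrite (join_r (star_ge Hfin _)).
Qed.

End Parts.

Section Parts2.
Context {disp : Order.disp_t} {T : tbLatticeType disp}
  (Hmod : @modular_lattice _ T) (Hfin : @finite_length _ T).

Lemma part_d (a b : T) : a = plus (star a) -> b = plus (star b) ->
  plus (star (a `|` b)) = a `|` b.
Proof.
move=> Ha Hb; apply/le_anti/andP; split.
  have := @part_b1 _ T^d (modular_dual Hmod) (finite_length_dual Hfin) (a `|` b).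
  by rewrite (plusEdual Hfin) (starEdual Hfin).
rewrite leUx; apply/andP; split; [rewrite {1}Ha | rewrite {1}Hb];
  apply: plus_mono => //; apply: star_mono => //; [exact: leUl | exact: leUr].
Qed.

Lemma part_e (a b : T) : plus (a `|` b) = plus a `|` plus b.
Proof.
apply/le_anti/andP; split; last first.
  by rewrite leUx !plus_mono // ?leUl ?leUr.
set w := plus a `|` plus b.
have wab : w <= a `|` b by apply: leU2; apply: plus_le.
have Ha := at_up Hmod (co_at Hmod Hfin (co_plus Hfin a)) (leUl (plus a) (plus b)).
have Hb := at_up Hmod (co_at Hmod Hfin (co_plus Hfin b)) (leUr (plus b) (plus a)).
rewrite -/w in Ha Hb.
have := at_join Ha Hb.
have -> : (a `|` w) `|` (b `|` w) = a `|` b.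
  by rewrite joinACA joinxx (join_l wab).
by move=> /(at_co Hmod Hfin) /(co_plus_le Hfin).
Qed.

End Parts2.

Theorem lemma6p1 (disp : Order.disp_t) (M : tbLatticeType disp)
  (Hmod : @modular_lattice disp M) (Hfin : @finite_length disp M) :
  forall a b : M,
    (a <= b -> star a <= star b) /\
    (a <= b -> plus a <= plus b) /\
    (a <= star (plus a) /\ star (plus a) <= star a) /\
    (plus a <= plus (star a) /\ plus (star a) <= a) /\
    star (plus (star a)) = star a /\
    plus (star (plus a)) = plus a /\
    (a = plus (star a) -> b = plus (star b) -> plus (star (a `|` b)) = a `|` b) /\
    (a = star (plus a) -> b = star (plus b) -> star (plus (a `&` b)) = a `&` b) /\
    plus (a `|` b) = plus a `|` plus b /\
    star (a `&` b) = star a `&` star b.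
Proof.
have Hmd := modular_dual Hmod; have Hfd := finite_length_dual Hfin.
have b2 : forall x : M, plus (star x) <= x.
  move=> x; have := @part_b1 _ M^d Hmd Hfd x.
  by rewrite (plusEdual Hfin) (starEdual Hfin).
have b1 := part_b1 Hmod Hfin.
move=> a b; split; first exact: star_mono.
split; first exact: plus_mono.
split; first by split; [exact: b1 | apply: star_mono => //; exact: plus_le].
split; first by split; [apply: plus_mono => //; exact: star_ge | exact: b2].
split.
  apply/le_anti/andP; split; [apply: star_mono => //; exact: b2 | exact: b1].
split.
  apply/le_anti/andP; split; [exact: b2 | apply: plus_mono => //; exact: b1].
split; first exact: part_d.
split.
  move=> Ha Hb; have := @part_d _ M^d Hmd Hfd a b.
  rewrite !(plusEdual Hfin) !(starEdual Hfin); apply => //.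
split; first exact: part_e.
have := @part_e _ M^d Hmd Hfd a b.
by rewrite !(plusEdual Hfin).
Qed.
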